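(* Fix $i\in\{1,\dots,\bar m\}$. Suppose $(A,B,K,\bar b,\bar D_{[i]})$ with $\bar D_{[i]}\in\mathbb{D}_+^{\bar m}$ satisfies condition (PI$_i$). Consider the LMI in the variables $(\mathbf A,\mathbf B,\mathbf K,\bar{\mathbf b},\hat{\bar{\mathbf D}}_{[i]})$: $$\begin{bmatrix} \mathbf I & \mathbf 0 & -\mathbf B^\top\bar P_i^\top & \mathbf K\\ * & \hat{\bar{\mathbf D}}_{[i]} & \bar{\mathbf b} & \mathbf 0\\ * & * & 2\bar{\mathbf b}_i+\mathcal{L}^{B^\top\bar P_i^\top,\mathbf I}_{\mathbf B^\top\bar P_i^\top,\mathbf I} & \bar P_i\mathbf A\\ * & * & * & \mathcal{L}^{\bar P,\bar D_{[i]}^{-1}}_{\bar P,\hat{\bar{\mathbf D}}_{[i]}}+\mathcal{L}^{K,\mathbf I}_{\mathbf K,\mathbf I} \end{bmatrix}\succ0 .$$ Then (a) it is satisfied by $(A,B,K,\bar b,\bar D_{[i]}^{-1})$; and (b) any solution with $\hat{\bar{\mathbf D}}_{[i]}\in\mathbb{D}_+^{\bar m}$ is such that $(\mathbf A,\mathbf B,\mathbf K,\bar{\mathbf b},\hat{\bar{\mathbf D}}_{[i]}^{-1})$ satisfies condition (PI$_i$).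
   Context: Notation: $M_i$ is the $i$-th row of $M$, $b_i$ the $i$-th entry of $b$; $\mathbb{D}_+^m$ is the set of $m\times m$ diagonal matrices with positive diagonal; $\succ0$ means symmetric positive definite; $*$ denotes symmetric blocks; $\mathbf I,\mathbf 0$ identity/zero blocks of appropriate size (the first diagonal $\mathbf I$ is $n_u\times n_u$). For $\mathbf L,L\in\mathbb{R}^{m\times n}$ and symmetric invertible $\mathbf D,D\in\mathbb{R}^{m\times m}$, $\mathcal{L}^{L,D}_{\mathbf L,\mathbf D}:=\mathbf L^\top D^{-1}L+L^\top D^{-1}\mathbf L-L^\top D^{-1}\mathbf DD^{-1}L$. Fixed data: $\bar P\in\mathbb{R}^{\bar m\times n_x}$. Variables: $A\in\mathbb{R}^{n_x\times n_x}$, $B\in\mathbb{R}^{n_x\times n_u}$, $K\in\mathbb{R}^{n_u\times n_x}$, $\bar b\in\mathbb{R}^{\bar m}$ (bold versions same sizes). Condition (PI$_i$) for $(A,B,K,\bar b,\bar D_{[i]})$: $$\begin{bmatrix}2\bar b_i-\bar b^\top\bar D_{[i]}\bar b & \bar P_i(A+BK)\\ * & \bar P^\top\bar D_{[i]}\bar P\end{bmatrix}\succ0.$$ *)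

(* Defs.v *)
From mathcomp Require Import all_boot all_order all_algebra.
Set Implicit Arguments. Unset Strict Implicit. Unset Printing Implicit Defensive.
Import Order.TTheory GRing.Theory Num.Theory.
Local Open Scope ring_scope.

Definition posdef (R : realFieldType) (n : nat) (M : 'M[R]_n) : Prop :=
  M^T = M /\ forall x : 'cV[R]_n, x != 0 -> 0 < (x^T *m M *m x) 0 0.

Definition diag_pos (R : realFieldType) (m : nat) (D : 'M[R]_m) : Prop :=
  is_diag_mx D /\ forall j : 'I_m, 0 < D j j.

(* \mathcal{L}^{L,D}_{LL,DD} = LL^T D^{-1} L + L^T D^{-1} LL - L^T D^{-1} DD D^{-1} L *)
Definition calL (R : realFieldType) (m n : nat)
  (L : 'M[R]_(m, n)) (D : 'M[R]_m) (LL : 'M[R]_(m, n)) (DD : 'M[R]_m) : 'M[R]_n :=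
  LL^T *m invmx D *m L + L^T *m invmx D *m LL
  - L^T *m invmx D *m DD *m invmx D *m L.

Definition PI (R : realFieldType) (nx nu mb : nat) (Pb : 'M[R]_(mb, nx))
  (i : 'I_mb) (A : 'M[R]_nx) (B : 'M[R]_(nx, nu)) (K : 'M[R]_(nu, nx))
  (b : 'cV[R]_mb) (D : 'M[R]_mb) : Prop :=
  let M11 : 'M[R]_1 := (2 * b i 0)%:M - b^T *m D *m b in
  let M12 : 'M[R]_(1, nx) := row i Pb *m (A + B *m K) in
  let M22 : 'M[R]_nx := Pb^T *m D *m Pb in
  posdef (block_mx M11 M12 M12^T M22).

(* The LMI of the statement, at the current point (B,K,Dbar) and in the
   variables (AA,BB,KK,bb,DDh). Block sizes: nu, mb, 1, nx. *)
Definition LMI (R : realFieldType) (nx nu mb : nat) (Pb : 'M[R]_(mb, nx))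
  (i : 'I_mb) (B : 'M[R]_(nx, nu)) (K : 'M[R]_(nu, nx)) (Dbar : 'M[R]_mb)
  (AA : 'M[R]_nx) (BB : 'M[R]_(nx, nu)) (KK : 'M[R]_(nu, nx))
  (bb : 'cV[R]_mb) (DDh : 'M[R]_mb) : 'M[R]_(nu + (mb + (1 + nx))) :=
  let Pi : 'rV[R]_nx := row i Pb in
  let M12 : 'M[R]_(nu, mb) := 0 in
  let M13 : 'M[R]_(nu, 1) := - (BB^T *m Pi^T) in
  let M14 : 'M[R]_(nu, nx) := KK in
  let M22 : 'M[R]_mb := DDh in
  let M23 : 'M[R]_(mb, 1) := bb in
  let M24 : 'M[R]_(mb, nx) := 0 in
  let M33 : 'M[R]_1 := (2 * bb i 0)%:M
      + calL (B^T *m Pi^T) 1%:M (BB^T *m Pi^T) 1%:M in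
  let M34 : 'M[R]_(1, nx) := Pi *m AA in
  let M44 : 'M[R]_nx := calL Pb (invmx Dbar) Pb DDh + calL K 1%:M KK 1%:M in
  block_mx 1%:M (row_mx M12 (row_mx M13 M14))
           (col_mx M12^T (col_mx M13^T M14^T))
           (block_mx M22 (row_mx M23 M24) (col_mx M23^T M24^T)
                     (block_mx M33 M34 M34^T M44)).

(* Main.v *)
Require Import Defs.
From mathcomp Require Import all_boot all_order all_algebra.
From mathcomp Require Import ring lra.
Set Implicit Arguments. Unset Strict Implicit. Unset Printing Implicit Defensive.
Import Order.TTheory GRing.Theory Num.Theory.
Local Open Scope ring_scope.

Section S.
Variable R : realFieldType.

Definition quad {n} (M : 'M[R]_n) (x : 'cV[R]_n) : 'M[R]_1 := x^T *m M *m x.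

Lemma quad_block p q (P : 'M[R]_p) (Q : 'M[R]_(p,q)) (Q' : 'M[R]_(q,p)) (S : 'M[R]_q) z x :
  quad (block_mx P Q Q' S) (col_mx z x) =
  quad P z + z^T *m Q *m x + (x^T *m Q' *m z + quad S x).
Proof.
rewrite /quad tr_col_mx mul_row_block mul_row_col !mulmxDl.
rewrite -!addrA; congr (_ + _).
by rewrite addrCA.
Qed.

Lemma schur_quad p q (P : 'M[R]_p) (Q : 'M[R]_(p,q)) (S : 'M[R]_q) z x :
  P^T = P -> P \in unitmx ->
  quad (block_mx P Q Q^T S) (col_mx z x) =
  quad P (z + invmx P *m (Q *m x)) + (quad S x - (Q *m x)^T *m invmx P *m (Q *m x)).
Proof.
move=> sP uP; rewrite quad_block /quad.
set u := Q *m x.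
have e1 : z^T *m Q *m x = z^T *m u by rewrite /u mulmxA.
have e2 : x^T *m Q^T *m z = u^T *m z by rewrite /u trmx_mul.
have e3 : (invmx P *m u)^T = u^T *m invmx P by rewrite trmx_mul trmx_inv sP.
rewrite e1 e2 [(_ + _)^T]linearD /= e3 !mulmxDl !mulmxDr.
have e4 : z^T *m P *m (invmx P *m u) = z^T *m u by rewrite -mulmxA (mulmxA P) mulmxV // mul1mx.
have e5 : u^T *m invmx P *m P *m z = u^T *m z by rewrite -(mulmxA _ _ P) mulVmx // mulmx1.
have e6 : u^T *m invmx P *m P *m (invmx P *m u) = u^T *m invmx P *m u
  by rewrite -(mulmxA _ _ P) mulVmx // mulmx1 mulmxA.
rewrite e4 e5 e6.
set a := z^T *m P *m z; set b := z^T *m u; set c := u^T *m z; set d := u^T *m invmx P *m u.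
set e := x^T *m S *m x.
by rewrite -!addrA [d + _]addrC subrK.
Qed.

Lemma diag_sym {m} (D : 'M[R]_m) : diag_pos D -> D^T = D.
Proof.
move=> [/is_diag_mxP dD _]; apply/matrixP => j k; rewrite mxE.
have [->//|njk] := eqVneq j k.
by rewrite !dD // eq_sym.
Qed.

Lemma diag_quad {m} (D : 'M[R]_m) (u : 'cV[R]_m) : diag_pos D ->
  quad D u 0 0 = \sum_j D j j * u j 0 ^+ 2.
Proof.
move=> [/is_diag_mxP dD _]; rewrite /quad !mxE; apply: eq_bigr => k _.
rewrite !mxE (bigD1 k) //= big1 ?addr0; last first.
  by move=> j njk; rewrite dD ?mulr0.
by rewrite mxE; ring.
Qed.

Lemma diag_quad_ge0 {m} (D : 'M[R]_m) (u : 'cV[R]_m) : diag_pos D ->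
  0 <= quad D u 0 0.
Proof.
move=> dp; rewrite diag_quad //; apply: sumr_ge0 => j _.
by apply: mulr_ge0; [exact: ltW (dp.2 j) | exact: sqr_ge0].
Qed.

Lemma diag_quad_gt0 {m} (D : 'M[R]_m) (u : 'cV[R]_m) : diag_pos D -> u != 0 ->
  0 < quad D u 0 0.
Proof.
move=> dp nu; have [j nj] : exists j, u j 0 != 0.
  case: (pickP (fun j => u j 0 != 0)) => [j nj|h]; first by exists j.
  case/eqP: nu; apply/matrixP => a b.
  by rewrite ord1 mxE; move: (h a) => /= /negbFE/eqP.
rewrite diag_quad // (bigD1 j) //=; apply: ltr_pwDl.
  apply: mulr_gt0; [exact: dp.2 | by rewrite exprn_even_gt0 //= nj orbT].
apply: sumr_ge0 => k _.
by apply: mulr_ge0; [exact: ltW (dp.2 k) | exact: sqr_ge0].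
Qed.

Lemma diag_unit {m} (D : 'M[R]_m) : diag_pos D -> D \in unitmx.
Proof.
move=> [/is_diag_mxP dD pD].
have -> : D = diag_mx (\row_j D j j).
  apply/matrixP => j k; rewrite !mxE; have [->|njk] := eqVneq j k; first by rewrite mulr1n.
  by rewrite dD ?mulr0n //; exact: njk.
rewrite unitmxE det_diag unitfE; apply/lt0r_neq0/prodr_gt0 => j _.
by rewrite mxE.
Qed.

Lemma inv_quad {m} (D : 'M[R]_m) (u : 'cV[R]_m) : diag_pos D ->
  quad (invmx D) u = quad D (invmx D *m u).
Proof.
move=> dp; have uD := diag_unit dp.
rewrite /quad trmx_mul trmx_inv (diag_sym dp) -!mulmxA (mulmxA D) mulmxV // mul1mx.
by [].
Qed.

Lemma inv_quad_ge0 {m} (D : 'M[R]_m) (u : 'cV[R]_m) : diag_pos D ->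
  0 <= quad (invmx D) u 0 0.
Proof. by move=> dp; rewrite inv_quad // diag_quad_ge0. Qed.

Lemma inv_quad_gt0 {m} (D : 'M[R]_m) (u : 'cV[R]_m) : diag_pos D -> u != 0 ->
  0 < quad (invmx D) u 0 0.
Proof.
move=> dp nu; rewrite inv_quad // diag_quad_gt0 //.
apply: contra nu => /eqP h; apply/eqP.
by rewrite -[u]mul1mx -(mulmxV (diag_unit dp)) -mulmxA h mulmx0.
Qed.

Lemma one_pos m : diag_pos (1%:M : 'M[R]_m).
Proof. by split; [exact: scalar_mx_is_diag | move=> j; rewrite mxE eqxx]. Qed.
End S.
Arguments quad {R n}.
Arguments diag_sym {R m D}. Arguments diag_unit {R m D}.
Arguments diag_quad_ge0 {R m D} u. Arguments inv_quad_ge0 {R m D} u.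
Arguments diag_quad_gt0 {R m D u}. Arguments inv_quad_gt0 {R m D u}.
Arguments one_pos {R m}.

Section Main.
Variables (R : realFieldType) (nx nu mb : nat) (Pb : 'M[R]_(mb, nx)) (i : 'I_mb)
  (B : 'M[R]_(nx, nu)) (K : 'M[R]_(nu, nx)) (Dbar : 'M[R]_mb).

Definition L3 (AA : 'M[R]_nx) (BB : 'M[R]_(nx, nu)) (KK : 'M[R]_(nu, nx))
  (bb : 'cV[R]_mb) (DDh : 'M[R]_mb) : 'M[R]_(1 + nx) :=
  let Pi : 'rV[R]_nx := row i Pb in
  let M33 : 'M[R]_1 := (2 * bb i 0)%:M
      + calL (B^T *m Pi^T) 1%:M (BB^T *m Pi^T) 1%:M in
  let M34 : 'M[R]_(1, nx) := Pi *m AA in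
  let M44 : 'M[R]_nx := calL Pb (invmx Dbar) Pb DDh + calL K 1%:M KK 1%:M in
  block_mx M33 M34 M34^T M44.

Lemma key AA BB KK bb DDh y1 y2 x1 x2 :
  DDh^T = DDh -> DDh \in unitmx ->
  quad (LMI Pb i B K Dbar AA BB KK bb DDh) (col_mx y1 (col_mx y2 (col_mx x1 x2))) =
  quad 1%:M (y1 + (- (BB^T *m (row i Pb)^T) *m x1 + KK *m x2)) +
  (quad DDh (y2 + invmx DDh *m (bb *m x1)) +
   (quad (L3 AA BB KK bb DDh) (col_mx x1 x2) - (bb *m x1)^T *m invmx DDh *m (bb *m x1))
   - (- (BB^T *m (row i Pb)^T) *m x1 + KK *m x2)^T *m (- (BB^T *m (row i Pb)^T) *m x1 + KK *m x2)).
Proof.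
move=> sDh uDh; rewrite /LMI /=.
set M13 := - (BB^T *m (row i Pb)^T).
have e1 : col_mx (0 : 'M[R]_(nu, mb))^T (col_mx M13^T KK^T) = (row_mx 0 (row_mx M13 KK))^T.
  by rewrite !tr_row_mx.
have e2 : col_mx bb^T (0 : 'M[R]_(mb, nx))^T = (row_mx bb 0)^T by rewrite tr_row_mx.
rewrite e1 e2 schur_quad ?trmx1 ?unitmx1 // schur_quad //.
by rewrite invmx1 !mul1mx !mulmx1 !mul_row_col mul0mx add0r mul0mx addr0.
Qed.

Lemma eD (A C : 'M[R]_1) : (A + C) 0 0 = A 0 0 + C 0 0. Proof. by rewrite mxE. Qed.
Lemma e0 : (0 : 'M[R]_1) 0 0 = 0. Proof. by rewrite mxE. Qed.
Lemma eN (A : 'M[R]_1) : (- A) 0 0 = - A 0 0. Proof. by rewrite mxE. Qed.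

Lemma G2lem (DDh : 'M[R]_mb) : DDh^T = DDh -> DDh \in unitmx -> Dbar^T = Dbar -> Dbar \in unitmx ->
  calL Pb (invmx Dbar) Pb DDh = Pb^T *m invmx DDh *m Pb -
  (Pb - DDh *m Dbar *m Pb)^T *m invmx DDh *m (Pb - DDh *m Dbar *m Pb).
Proof.
move=> sDh uDh sD uD; rewrite /calL invmxK.
rewrite [(Pb - _)^T]linearB /= !trmx_mul sDh sD.
rewrite !mulmxBl !mulmxBr !opprB.
have f1 : Pb^T *m invmx DDh *m (DDh *m Dbar *m Pb) = Pb^T *m Dbar *m Pb.
  by rewrite !mulmxA -(mulmxA _ _ DDh) mulVmx // mulmx1.
have f2 : Pb^T *m Dbar *m DDh *m invmx DDh *m Pb = Pb^T *m Dbar *m Pb.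
  by rewrite -(mulmxA _ DDh) mulmxV // mulmx1.
have f3 : Pb^T *m Dbar *m DDh *m invmx DDh *m (DDh *m Dbar *m Pb) = Pb^T *m Dbar *m DDh *m Dbar *m Pb.
  by rewrite -(mulmxA (Pb^T *m Dbar) DDh) mulmxV // mulmx1 !mulmxA.
rewrite [Pb^T *m (Dbar *m DDh)]mulmxA f1 f2 f3.
set a := Pb^T *m Dbar *m Pb; set c := Pb^T *m Dbar *m DDh *m Dbar *m Pb.
by rewrite addrCA [_ + (_ - _)]addrC subrK addrAC.
Qed.


Definition PIM (AA : 'M[R]_nx) (BB : 'M[R]_(nx, nu)) (KK : 'M[R]_(nu, nx))
  (bb : 'cV[R]_mb) (D : 'M[R]_mb) : 'M[R]_(1 + nx) :=
  block_mx ((2 * bb i 0)%:M - bb^T *m D *m bb) (row i Pb *m (AA + BB *m KK))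
    (row i Pb *m (AA + BB *m KK))^T (Pb^T *m D *m Pb).

Lemma pi_eq AA BB KK bb DDh x1 x2 :
  DDh^T = DDh -> DDh \in unitmx -> Dbar^T = Dbar -> Dbar \in unitmx ->
  quad (PIM AA BB KK bb (invmx DDh)) (col_mx x1 x2) =
  (quad (L3 AA BB KK bb DDh) (col_mx x1 x2) - (bb *m x1)^T *m invmx DDh *m (bb *m x1)
   - (- (BB^T *m (row i Pb)^T) *m x1 + KK *m x2)^T *m (- (BB^T *m (row i Pb)^T) *m x1 + KK *m x2))
  + (quad 1%:M ((BB^T *m (row i Pb)^T - B^T *m (row i Pb)^T) *m x1)
     + quad (invmx DDh) ((Pb - DDh *m Dbar *m Pb) *m x2) + quad 1%:M ((KK - K) *m x2)).
Proof.
move=> sDh uDh sD uD; rewrite /L3 /PIM /= G2lem // !quad_block /quad.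
move: (invmx DDh) (Pb - DDh *m Dbar *m Pb) (row i Pb) => Di W Pi.
rewrite /calL invmx1 !mulmx1.
rewrite !trmx_mul !trmxK.
rewrite ?[(_ + _)^T]linearD ?[(_ - _)^T]linearB ?[(- _)^T]linearN /=.
rewrite !trmx_mul !trmxK.
rewrite !(mulmxDl, mulmxDr, mulmxBl, mulmxBr, mulNmx, mulmxN).
rewrite !mulmxA.
rewrite ?[(- _)^T]linearN /= ?trmx_mul ?trmxK ?(mulNmx, mulmxN) !mulmxA.
apply/matrixP => a c; rewrite !ord1 !(eD, eN).
ring.
Qed.

Lemma tr11 (M : 'M[R]_1) : M^T = M.
Proof. by apply/matrixP => a c; rewrite !ord1 mxE. Qed.

Lemma quad0 n (M : 'M[R]_n) : quad M 0 = 0.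
Proof. by rewrite /quad mulmx0. Qed.

Lemma calL_sym m n (L : 'M[R]_(m, n)) D LL DD : D^T = D -> DD^T = DD ->
  (calL L D LL DD)^T = calL L D LL DD.
Proof.
move=> sDD sDD'; rewrite /calL.
rewrite ?[(_ + _)^T]linearD ?[(_ - _)^T]linearB ?[(- _)^T]linearN /=.
rewrite ?[(_ + _)^T]linearD ?[(_ - _)^T]linearB ?[(- _)^T]linearN /=.
rewrite !trmx_mul !trmxK trmx_inv sDD sDD' !mulmxA.
by rewrite [LL^T *m _ *m _ + _]addrC.
Qed.

Lemma LMI_sym AA BB KK bb DDh : Dbar^T = Dbar -> DDh^T = DDh ->
  (LMI Pb i B K Dbar AA BB KK bb DDh)^T = LMI Pb i B K Dbar AA BB KK bb DDh.
Proof.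
move=> sD sDh; rewrite /LMI /= !tr_block_mx !tr_col_mx !tr_row_mx !trmxK trmx1 sDh tr11.
rewrite [(_ + _)^T]linearD /= !calL_sym ?trmx1 ?trmx_inv ?sD //.
Qed.

Lemma PIM_sym AA BB KK bb D : D^T = D -> (PIM AA BB KK bb D)^T = PIM AA BB KK bb D.
Proof.
by move=> sD; rewrite /PIM tr_block_mx trmxK tr11 !trmx_mul trmxK sD mulmxA.
Qed.

End Main.

Theorem theorem3 (R : realFieldType) (nx nu mb : nat) (Pb : 'M[R]_(mb, nx))
  (i : 'I_mb) (A : 'M[R]_nx) (B : 'M[R]_(nx, nu)) (K : 'M[R]_(nu, nx))
  (b : 'cV[R]_mb) (Dbar : 'M[R]_mb) :
  diag_pos Dbar ->
  PI Pb i A B K b Dbar ->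
  posdef (LMI Pb i B K Dbar A B K b (invmx Dbar)) /\
  (forall (AA : 'M[R]_nx) (BB : 'M[R]_(nx, nu)) (KK : 'M[R]_(nu, nx))
          (bb : 'cV[R]_mb) (DDh : 'M[R]_mb),
      diag_pos DDh ->
      posdef (LMI Pb i B K Dbar AA BB KK bb DDh) ->
      PI Pb i AA BB KK bb (invmx DDh)).
Proof.
move=> dpD hPI; have uD := diag_unit dpD; have sD := diag_sym dpD.
have [_ hpos] : posdef (PIM Pb i A B K b Dbar) := hPI.
split.
- have sDi : (invmx Dbar)^T = invmx Dbar by rewrite trmx_inv sD.
  have uDi : invmx Dbar \in unitmx by rewrite unitmx_inv.
  split; first exact: LMI_sym.
  move=> y ny; change (0 < quad (LMI Pb i B K Dbar A B K b (invmx Dbar)) y 0 0).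
  move: ny; rewrite -(vsubmxK y) -(vsubmxK (dsubmx y)) -(vsubmxK (dsubmx (dsubmx y))).
  move: (usubmx y) (usubmx (dsubmx y)) (usubmx (dsubmx (dsubmx y)))
        (dsubmx (dsubmx (dsubmx y))) => y1 y2 x1 x2 ny.
  rewrite key // invmxK.
  have := @pi_eq _ _ _ _ Pb i B K Dbar A B K b (invmx Dbar) x1 x2 sDi uDi sD uD.
  rewrite invmxK mulVmx // mul1mx !subrr !mul0mx !quad0 !addr0.
  move/(congr1 (fun M : 'M[R]_1 => M 0 0)); rewrite /= !(eD, eN) => hE.
  have h1 := diag_quad_ge0 (y1 + (- (B^T *m (row i Pb)^T) *m x1 + K *m x2)) one_pos.
  have h2 := inv_quad_ge0 (y2 + Dbar *m (b *m x1)) dpD.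
  have [X0|nX] := eqVneq (col_mx x1 x2) 0.
    move: (X0) => /eqP; rewrite col_mx_eq0 => /andP[/eqP e1 /eqP e2]; subst x1 x2.
    have hz : quad (PIM Pb i A B K b Dbar) (col_mx 0 0) 0 0 = 0 :> R by rewrite X0 quad0 mxE.
    have [Y1|nY1] := eqVneq y1 0.
      have nY2 : y2 != 0 by apply: contraNneq ny => ->; rewrite Y1 !col_mx0.
      have h3 : 0 < quad (invmx Dbar) (y2 + Dbar *m (b *m 0)) 0 0.
        by rewrite !mulmx0 addr0; exact: inv_quad_gt0 dpD nY2.
      lra.
    have h3 : 0 < quad 1%:M (y1 + (- (B^T *m (row i Pb)^T) *m 0 + K *m 0)) 0 0.
      by rewrite !mulmx0 !addr0; exact: diag_quad_gt0 one_pos nY1.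
    lra.
  have h3 : 0 < quad (PIM Pb i A B K b Dbar) (col_mx x1 x2) 0 0 := hpos _ nX.
  lra.
- move=> AA BB KK bb DDh dpH [_ hL].
  have uH := diag_unit dpH; have sH := diag_sym dpH.
  have sHi : (invmx DDh)^T = invmx DDh by rewrite trmx_inv sH.
  split; first exact: PIM_sym.
  move=> x nx0; change (0 < quad (PIM Pb i AA BB KK bb (invmx DDh)) x 0 0).
  move: nx0; rewrite -(vsubmxK x); move: (usubmx x) (dsubmx x) => x1 x2 nX.
  rewrite (@pi_eq _ _ _ _ Pb i B K Dbar) // !eD.
  set y := col_mx (- (- (BB^T *m (row i Pb)^T) *m x1 + KK *m x2))
             (col_mx (- (invmx DDh *m (bb *m x1))) (col_mx x1 x2)).
  have ny : y != 0 by rewrite /y col_mx_eq0 col_mx_eq0 (negbTE nX) !andbF.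
  have hy : 0 < quad (LMI Pb i B K Dbar AA BB KK bb DDh) y 0 0 := hL y ny.
  move: hy.
  rewrite /y key // !addNr !quad0 !(eD, eN) !e0 => hT.
  have h1 := diag_quad_ge0 ((BB^T *m (row i Pb)^T - B^T *m (row i Pb)^T) *m x1) one_pos.
  have h2 := inv_quad_ge0 ((Pb - DDh *m Dbar *m Pb) *m x2) dpH.
  have h3 := diag_quad_ge0 ((KK - K) *m x2) one_pos.
  lra.
Qed.
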